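(* Let $G$ be a graph with vertices $v_1,\ldots,v_n$ and let $t\ge 1$ be an integer. Let $G'$ and $\alpha$ be constructed as follows. $V(G')=V_G\cup V_B\cup V_C$, where $V_G=\{g_1,\ldots,g_n\}$ induces a copy of $G$ ($g_ig_j$ an edge iff $v_iv_j\in E(G)$); $V_B=\{b^i_j\mid i,j\in\{1,\ldots,t\}\}$ induces a copy of $B_t$ (with $b^i_j b^{i'}_{j'}$ an edge iff $i\neq i'$ and $j\neq j'$); every vertex of $V_G$ is adjacent to every vertex of $V_B$; and $V_C=C_1\cup\cdots\cup C_{n+t+1}$ where the $C_i$ are pairwise disjoint independent sets, each of size $2t+2t^2$, with no edges between different $C_i$. Further, each $g_i$ is adjacent to all vertices of $V_C\setminus(C_i\cup C_{n+t+1})$ and each vertex of $V_B$ is adjacent to all vertices of $C_{n+t+1}$; there are no other edges. Define $\alpha(g_i)=i$ for $1\le i\le n$, $\alpha(c)=i$ for every $c\in C_i$ ($1\le i\le n+t+1$), and $\alpha(b^i_j)=n+i$. Let $k=n+t+1$ and let $\alpha_0,\ldots,\alpha_\ell$ be a $k$-recoloring sequence of $G'$ with $\alpha_0=\alpha$ and $\ell\le 2t+2t^2$. Then for all $g_i\in V_G$ and all $0\le x\le \ell$, $\alpha_x(g_i)\in\{i,n+t+1\}$, and for all $b\in V_B$ and all $0\le x\le\ell$, $\alpha_x(b)\ne n+t+1$.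
   Context: A $k$-coloring of a graph is a map $V\to\{1,\ldots,k\}$ with adjacent vertices receiving different colors. $\mathcal{C}_k(G)$ is the graph whose vertices are the $k$-colorings of $G$, two adjacent iff they differ on exactly one vertex. A $k$-recoloring sequence of length $m$ is a sequence $\alpha_0,\ldots,\alpha_m$ of $k$-colorings such that consecutive colorings are equal or adjacent in $\mathcal{C}_k(G)$. *)

(* Defs.v *)
From mathcomp Require Import all_boot.
Set Implicit Arguments. Unset Strict Implicit. Unset Printing Implicit Defensive.

Definition is_coloring (V : finType) (adj : rel V) (k : nat) (f : V -> nat) : Prop :=
  (forall v, 1 <= f v <= k) /\ (forall u v, adj u v -> f u != f v).

Definition recoloring_seq (V : finType) (adj : rel V) (k : nat)
    (alpha : nat -> V -> nat) (l : nat) : Prop :=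
  (forall x, x <= l -> is_coloring adj k (alpha x)) /\
  (forall x, x < l -> #|[set v | alpha x v != alpha x.+1 v]| <= 1).

(* Vertex set of G':
   inl (inl i)      = g_{i+1}          (i : 'I_n)
   inl (inr (i,j))  = b^{i+1}_{j+1}    (i j : 'I_t)
   inr (c, m)       = m-th vertex of C_{c+1}  (c : 'I_(n+t+1), m : 'I_(2t+2t^2)) *)
Definition Gp_vert (n t : nat) : finType :=
  (('I_n + ('I_t * 'I_t)) + ('I_(n + t + 1) * 'I_(2 * t + 2 * t ^ 2)))%type.

Definition Gp_adj (n t : nat) (G : rel 'I_n) : rel (Gp_vert n t) :=
  fun u v =>
  match u, v with
  | inl (inl a), inl (inl b) => G a b
  | inl (inr (i, j)), inl (inr (i', j')) => (i != i') && (j != j')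
  | inl (inl _), inl (inr _) => true
  | inl (inr _), inl (inl _) => true
  | inl (inl a), inr (c, _) => (nat_of_ord c != nat_of_ord a) && (nat_of_ord c != n + t)
  | inr (c, _), inl (inl a) => (nat_of_ord c != nat_of_ord a) && (nat_of_ord c != n + t)
  | inl (inr _), inr (c, _) => nat_of_ord c == n + t
  | inr (c, _), inl (inr _) => nat_of_ord c == n + t
  | inr _, inr _ => false
  end.

Definition Gp_alpha (n t : nat) (v : Gp_vert n t) : nat :=
  match v with
  | inl (inl a) => (nat_of_ord a).+1
  | inl (inr (i, _)) => n + (nat_of_ord i).+1
  | inr (c, _) => (nat_of_ord c).+1
  end.

(* Main.v *)
Require Import Defs.
From mathcomp Require Import all_boot.

Lemma card_diff (V : finType) (adj : rel V) (k : nat) (alpha : nat -> V -> nat) (l : nat)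
  (hseq : recoloring_seq adj k alpha l) :
  forall x, x <= l -> #|[set v | alpha x v != alpha 0 v]| <= x.
Proof.
case: hseq => _ hs.
elim=> [|x IH] hx.
  rewrite leqn0 cards_eq0; apply/eqP/setP=> v; by rewrite !inE eqxx.
apply: leq_trans (_ : #|[set v | alpha x v != alpha 0 v] :|: [set v | alpha x v != alpha x.+1 v]| <= _).
  apply: subset_leq_card; apply/subsetP=> v; rewrite !inE.
  case: (eqVneq (alpha x v) (alpha 0 v)) => [<-|] //=.
  by rewrite eq_sym.
rewrite cardsU; apply: leq_trans (leq_subr _ _) _.
rewrite -addn1; apply: leq_add; first by apply: IH; apply: ltnW.
by rewrite addn1; apply: hs.
Qed.

Arguments card_diff {V adj k alpha l}.

Lemma keep_C (n t : nat) (G : rel 'I_n)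
    (alpha : nat -> Gp_vert n t -> nat) (l : nat)
    (hseq : recoloring_seq (@Gp_adj n t G) (n + t + 1) alpha l)
    (hl : l <= 2 * t + 2 * t ^ 2) (x : nat) (hx : x <= l)
    (v : 'I_n + ('I_t * 'I_t)) (j : 'I_(n + t + 1))
    (hv : alpha x (inl v) != alpha 0 (inl v)) :
  exists m, alpha x (inr (j, m)) = alpha 0 (inr (j, m)).
Proof.
have [/existsP [m /eqP hm]|/existsPn hall] := boolP [exists m, alpha x (inr (j, m)) == alpha 0 (inr (j, m))]; first by exists m.
exfalso.
have := card_diff hseq x hx.
set D := [set w | _].
have : #|inl v |: [set (inr (j, m) : Gp_vert n t) | m in 'I_(2 * t + 2 * t ^ 2)]| <= #|D|.
  apply: subset_leq_card; apply/subsetP=> w; rewrite !inE.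
  case/orP=> [/eqP ->|/imsetP [m _ ->]]; first by [].
  exact: hall m.
rewrite cardsU1 card_imset; last by move=> a b [].
rewrite card_ord.
have -> : inl v \notin [set (inr (j, m) : Gp_vert n t) | m in 'I_(2 * t + 2 * t ^ 2)].
  by apply/imsetP => [[m _]].
move=> h1 h2.
have := leq_trans (leq_trans h1 h2) (leq_trans hx hl).
by rewrite add1n ltnn.
Qed.

Arguments keep_C {n t G alpha l}.

Theorem mainTheorem2 (n t : nat) (G : rel 'I_n)
    (Gsym : symmetric G) (Girr : irreflexive G) (ht : 1 <= t)
    (alpha : nat -> Gp_vert n t -> nat) (l : nat)
    (hseq : recoloring_seq (@Gp_adj n t G) (n + t + 1) alpha l)
    (h0 : alpha 0 = @Gp_alpha n t)
    (hl : l <= 2 * t + 2 * t ^ 2) :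
  (forall (i : 'I_n) (x : nat), x <= l ->
     (alpha x (inl (inl i)) == (nat_of_ord i).+1) ||
     (alpha x (inl (inl i)) == n + t + 1)) /\
  (forall (p : 'I_t * 'I_t) (x : nat), x <= l ->
     alpha x (inl (inr p)) != n + t + 1).
Proof.
split.
- move=> i x hx.
  have [hrng hadj] : is_coloring (@Gp_adj n t G) (n + t + 1) (alpha x).
    by case: hseq => h _; apply: h.
  have hd0 := hadj (inl (inl i)).
  have /andP [c1 c2] := hrng (inl (inl i)).
  have hd1 : forall j : 'I_(n + t + 1), alpha x (inl (inl i)) != i.+1 ->
      exists m, alpha x (inr (j, m)) = (nat_of_ord j).+1.
    by move=> j h; have := keep_C hseq hl x hx (inl i) j; rewrite h0; apply.
  move: (alpha x (inl (inl i))) c1 c2 hd0 hd1 => c c1 c2 hd0 hd1.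
  case: (eqVneq c i.+1) => //= hne.
  apply/negPn/negP => hne2.
  have hcj : c.-1 < n + t + 1 by apply: leq_trans c2; rewrite ltn_predL.
  have [m hm] := hd1 (Ordinal hcj) hne.
  have := hd0 (inr (Ordinal hcj, m)).
  rewrite /= hm /= prednK //.
  have -> : (c.-1 != i) && (c.-1 != n + t).
    apply/andP; split; apply/eqP=> e.
      by move/eqP: hne; apply; rewrite -e prednK.
    by move/eqP: hne2; apply; rewrite -(prednK c1) e addn1.
  by rewrite eqxx => /(_ isT).
- move=> [p1 p2] x hx.
  apply/negP=> /eqP hc.
  have [hrng hadj] : is_coloring (@Gp_adj n t G) (n + t + 1) (alpha x).
    by case: hseq => h _; apply: h.
  have hcj : n + t < n + t + 1 by rewrite addn1.
  have hd : alpha x (inl (inr (p1, p2))) != alpha 0 (inl (inr (p1, p2))).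
    rewrite h0 hc /=; apply/eqP => e.
    have : n + p1.+1 <= n + t by rewrite leq_add2l.
    by rewrite -e addn1 ltnn.
  have [m hm] := keep_C hseq hl x hx _ (Ordinal hcj) hd.
  have := hadj (inl (inr (p1, p2))) (inr (Ordinal hcj, m)).
  by rewrite /= eqxx hm h0 /= hc addn1 eqxx => /(_ isT).
Qed.
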